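(* Let $G$ be a torsion-free metrizable abelian topological group in which every cyclic subgroup is discrete. The following are equivalent: (i) $G$ is not NSS; (ii) $G$ contains a subgroup topologically isomorphic to $\mathbb{Z}^{(\mathbb{N})}$. If $G$ is also complete, then the following is equivalent to (i) and (ii): (iii) $G$ contains a subgroup topologically isomorphic to $\mathbb{Z}^{\mathbb{N}}$.
   Context: $\mathbb{Z}^{\mathbb{N}}$ carries the Tychonoff product topology with $\mathbb{Z}$ discrete, and $\mathbb{Z}^{(\mathbb{N})}$ is its subgroup of finitely supported sequences with the subspace topology. A topological group is NSS if it has a neighbourhood of the identity containing no non-trivial subgroup. *)

(* Defs.v *)
From HB Require Import structures.
From mathcomp Require Import all_boot all_order all_algebra.
From mathcomp Require Import all_classical all_reals all_analysis.
From mathcomp Require Import Rstruct.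
Import GRing.Theory Num.Theory.

Set Implicit Arguments.
Unset Strict Implicit.
Unset Printing Implicit Defensive.

Local Open Scope classical_set_scope.
Local Open Scope ring_scope.

(** Z with the discrete topology, and Z^N := functions nat -> Z with the
    Tychonoff product (= pointwise) topology. *)
Definition Zdisc := discrete_topology int.
Definition ZN := {ptws nat -> Zdisc}.

(** Z^(N): the finitely supported sequences (a subset of Z^N, given the
    subspace topology below). *)
Definition finsupp : set ZN :=
  [set a | exists N : nat, forall n : nat, (N <= n)%N -> a n = 0].

Definition is_subgroup (G : zmodType) (H : set G) : Prop :=
  H 0 /\ (forall x y, H x -> H y -> H (x - y)).

Definition NSS (G : topologicalZmodType) : Prop :=
  exists U : set G, nbhs (0 : G) U /\
    forall H : set G, is_subgroup H -> H `<=` U -> H = [set 0].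

Definition torsion_free (G : zmodType) : Prop :=
  forall (x : G) (n : nat), (0 < n)%N -> x *+ n = 0 -> x = 0.

Definition cyclic_sub (G : zmodType) (x : G) : set G :=
  [set y | exists k : int, y = x *~ k].

Definition discrete_subset (T : topologicalType) (A : set T) : Prop :=
  forall y, A y -> exists U : set T, nbhs y U /\ forall z, A z -> U z -> z = y.

Definition cyclic_subgroups_discrete (G : topologicalZmodType) : Prop :=
  forall x : G, discrete_subset (cyclic_sub x).

Definition metrizable (T : topologicalType) : Prop :=
  exists d : T -> T -> Rdefinitions.R,
    (forall x y, 0 <= d x y) /\
    (forall x y, d x y = 0 <-> x = y) /\
    (forall x y, d x y = d y x) /\
    (forall x y z, d x z <= d x y + d y z) /\
    (forall (x : T) (U : set T),
        nbhs x U <-> exists2 e : Rdefinitions.R, 0 < e & forall y, d x y < e -> U y).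

(** Cauchy sequences for the (two-sided = left = right, G abelian) group
    uniformity, and completeness.  For metrizable groups this is equivalent
    to completeness w.r.t. any compatible invariant metric. *)
Definition group_cauchy (G : topologicalZmodType) (x : nat -> G) : Prop :=
  forall U : set G, nbhs (0 : G) U ->
    exists N : nat, forall m n : nat, (N <= m)%N -> (N <= n)%N -> U (x m - x n).

Definition group_complete (G : topologicalZmodType) : Prop :=
  forall x : nat -> G, group_cauchy x -> exists l : G, x @ \oo --> l.

Definition top_group_embedding (A : set ZN) (G : topologicalZmodType)
    (f : ZN -> G) : Prop :=
  (forall a b, A a -> A b -> f (a + b) = f a + f b) /\
  (forall a b, A a -> A b -> f a = f b -> a = b) /\
  (forall a, A a -> forall V : set G, nbhs (f a) V ->
      exists U : set ZN, nbhs a U /\ forall b, A b -> U b -> V (f b)) /\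
  (forall a, A a -> forall U : set ZN, nbhs a U ->
      exists V : set G, nbhs (f a) V /\ forall b, A b -> V (f b) -> U b).

Definition contains_copy_of (A : set ZN) (G : topologicalZmodType) : Prop :=
  exists H : set G, is_subgroup H /\
    exists f : ZN -> G, f @` A = H /\ top_group_embedding A f.

(* Main.v *)
Require Import Defs.
From HB Require Import structures.
From mathcomp Require Import all_boot all_order all_algebra.
From mathcomp Require Import all_classical all_reals all_analysis.
From mathcomp Require Import Rstruct.
From mathcomp Require Import lra.
Import Order.TTheory GRing.Theory Num.Theory.
Local Open Scope classical_set_scope.
Local Open Scope ring_scope.
Lemma ZN_coord (a : ZN) (t : nat) : nbhs a [set b : ZN | b t = a t].
Proof.
have h := (@pointwise_cvgP nat Zdisc (nbhs a) a _).1 (@cvg_id _ (nbhs a)) t.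
have h2 := h (nbhs_filter a).
have := (@discrete_cvg Zdisc _ (a t) _).1 h2.
by apply.
Qed.
Definition cyl (K : nat) (a : ZN) : set ZN := [set b | forall i, (i < K)%N -> b i = a i].

Lemma cyl_nbhs K a : nbhs a (cyl K a).
Proof.
elim: K => [|K IH].
  by apply: (filterS _ (@filterT _ (nbhs a) _)) => b _ i.
apply: filterS (filterI IH (ZN_coord a K)) => b [h1 h2] i.
rewrite ltnS leq_eqVlt => /orP[/eqP->//|]; exact: h1.
Qed.

Lemma nbhs_cyl a U : nbhs a U -> exists K, cyl K a `<=` U.
Proof.
move=> aU; apply: contrapT => hn.
have hb : forall K, exists b, cyl K a b /\ ~ U b.
  move=> K; apply: contrapT => hK; apply: hn; exists K => b cb.
  apply: contrapT => nU; apply: hK; by exists b.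
have [b hbK] := choice hb.
have cv : b @ \oo --> (a : ZN).
  apply/(@pointwise_cvgP nat Zdisc).
  move=> t; apply/(@discrete_cvg Zdisc).
  exists t.+1 => // n /= tn; exact: (hbK n).1.
have := cv U aU; case=> N _ HN.
exact: (hbK N).2 (HN N (leqnn N)).
Qed.

Section Grp.
Context (G : topologicalZmodType).

Lemma shift_cont (x : G) : continuous (fun z : G => x + z).
Proof.
move=> z.
apply: (@continuous_comp _ _ _ (fun z => (x, z)) (fun p : G * G => p.1 + p.2)); last exact: add_continuous.
by apply: cvg_pair; [exact: cvg_cst|exact: cvg_id].
Qed.

Lemma nbhs_shift (x : G) (N : set G) : nbhs x N <-> nbhs 0 (fun z => N (x + z)).
Proof.
split=> h.
  have c := shift_cont x 0; apply: c; by rewrite /= addr0.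
have c := shift_cont (- x) x.
have h' : nbhs ((+%R (-x)) x) (fun z => N (x + z)) by rewrite /= addNr.
have h2 := c _ h'.
have e : (fun z => N (x + z)) \o (+%R (-x)) = N by apply: funext => z /=; rewrite addrA subrr add0r.
by rewrite -e.
Qed.

Lemma nbhs_half (V : set G) : nbhs 0 V ->
  exists W, nbhs 0 W /\ forall a b, W a -> W b -> V (a + b).
Proof.
move=> hV.
have c := @add_continuous G (0, 0).
have h' : nbhs ((fun p : G * G => p.1 + p.2) (0, 0)) V by rewrite /= addr0.
have := c _ h'.
case=> -[A B] /= [hA hB] hAB.
exists (A `&` B); split; first exact: filterI.
by move=> a b [? _] [_ ?]; apply: (hAB (a, b)).
Qed.

Lemma nbhs_opp (V : set G) : nbhs 0 V -> nbhs 0 (fun x => V (- x)).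
Proof.
move=> hV; have c := @opp_continuous G 0.
have h' : nbhs ((-%R : G -> G) 0) V by rewrite /= oppr0.
exact: (c _ h').
Qed.

End Grp.
Section Met.
Context (G : topologicalZmodType).

Lemma metr_hausdorff : metrizable G -> hausdorff_space G.
Proof.
case=> d [d0 [dE [dsym [dtri dnb]]]] p q cl.
apply: contrapT => npq.
have dpos : 0 < d p q.
  rewrite lt_neqAle d0 andbT eq_sym; apply/eqP => h; apply: npq; exact/dE.
have np : nbhs p [set y | d p y < d p q / 2] by apply/dnb; exists (d p q / 2) => //; lra.
have nq : nbhs q [set y | d q y < d p q / 2] by apply/dnb; exists (d p q / 2) => //; lra.
have [z [/= h1 h2]] := cl _ _ np nq.
have := dtri p z q; rewrite (dsym z q); lra.
Qed.

End Met.
Section Base.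
Context (G : topologicalZmodType).

Lemma metric_base : metrizable G -> exists B : nat -> set G,
  (forall k, nbhs 0 (B k)) /\ (forall U, nbhs 0 U -> exists k, B k `<=` U).
Proof.
case=> d [d0 [dE [dsym [dtri dnb]]]].
exists (fun k => [set y | d 0 y < 1 / (k.+1)%:R]); split.
  move=> k; apply/dnb; exists (1 / (k.+1)%:R) => //.
move=> U /dnb [e e0 he].
exists (Num.truncn (e^-1)) => y /= hy; apply: he.
have h1 := truncnS_gt (e^-1).
move: hy; rewrite ltr_pdivlMr ?ltr0n // => hy.
have : 1 < (Num.truncn e^-1).+1%:R * e.
  by rewrite -ltr_pdivrMr // div1r.
move=> h2.
have hn : 0 < ((Num.truncn e^-1).+1)%:R :> Rdefinitions.R by rewrite ltr0n.
rewrite -(ltr_pM2r hn); apply: lt_trans hy _; by rewrite mulrC.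
Qed.
End Base.
Lemma subgroup_zmul (G : zmodType) (H : set G) (y : G) :
  is_subgroup H -> H y -> forall m : int, H (y *~ m).
Proof.
case=> H0 Hsub Hy.
have Hopp x : H x -> H (- x) by move=> Hx; rewrite -sub0r; exact: Hsub.
have Hadd x z : H x -> H z -> H (x + z).
  by move=> Hx Hz; rewrite -[z]opprK; apply: Hsub => //; exact: Hopp.
have Hn n : H (y *+ n).
  by elim: n => [|n IH]; rewrite ?mulr0n // mulrS; exact: Hadd.
case=> n; first by rewrite -pmulrn.
by rewrite NegzE mulrNz -pmulrn; exact: Hopp.
Qed.

Lemma zmul_tf (G : zmodType) (y : G) (m : int) :
  torsion_free G -> y != 0 -> y *~ m = 0 -> m = 0.
Proof.
move=> tf y0; case: m => n.
  rewrite -pmulrn; case: n => [//|n] h.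
  by move: y0; rewrite (tf y n.+1 isT h) eqxx.
rewrite NegzE mulrNz -pmulrn => /eqP; rewrite oppr_eq0 => /eqP h.
by move: y0; rewrite (tf y n.+1 isT h) eqxx.
Qed.

Section Constr.
Context (G : topologicalZmodType) (tf : torsion_free G)
  (cd : cyclic_subgroups_discrete G) (nn : ~ NSS G)
  (B : nat -> set G) (hB : forall k, nbhs 0 (B k)).

Definition Step (V : set G) (k : nat) (y : G) (W : set G) : Prop :=
  [/\ y != 0, nbhs 0 W, (forall x, W x -> W (- x)), W `<=` B k &
   ((exists V' : set G, [/\ (forall a b, V' a -> V' b -> V (a + b)),
        cyclic_sub y `<=` V' & W `<=` V']) /\
   (forall (m : int) t u, W t -> W u -> y *~ m = u - t -> m = 0))].

Lemma step_ex V k : nbhs 0 V -> exists p : G * set G, Step V k p.1 p.2.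
Proof.
move=> hV.
have [Vq [hVq hVqV]] := @nbhs_half G V hV.
have : exists H : set G, [/\ is_subgroup H, H `<=` Vq & H <> [set 0]].
  apply: contrapT => hn; apply: nn; exists Vq; split => // H sH HV'.
  apply: contrapT => hne; apply: hn; by exists H.
case=> H [sH HV' Hne].
have [y Hy y0] : exists2 y, H y & y != 0.
  apply: contrapT => hn; apply: Hne; apply/seteqP; split => x /=.
    move=> Hx; apply/eqP; apply: contrapT => /negP hx; apply: hn; by exists x.
  by move=> ->; case: sH.
have cyc : cyclic_sub y `<=` Vq.
  by move=> z [m ->]; apply: HV'; exact: subgroup_zmul.
have [Z [hZ hZ0]] := cd y 0 (ex_intro _ 0 (esym (mulr0z y))).
pose W0 := Vq `&` Z `&` B k.
have hW0 : nbhs 0 W0 by apply: filterI; [apply: filterI|exact: hB].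
have [W1 [hW1 hW1W0]] := @nbhs_half G W0 hW0.
have W1W0 : W1 `<=` W0.
  by move=> x hx; rewrite -[x]addr0; apply: hW1W0 => //; exact: nbhs_singleton.
exists (y, W1 `&` (fun x => W1 (- x))); split => //=.
- by apply: filterI => //; exact: nbhs_opp.
- by move=> x [h1 h2]; split => //; rewrite opprK.
- by move=> x [/W1W0 [_ ?] _].
split.
  exists Vq; split => // x [/W1W0 [[? _] _] _] //.
  move=> m t u [ht1 ht2] [hu1 hu2] e.
  apply: (@zmul_tf G y m tf y0).
  apply: hZ0; first by exists m.
  rewrite e; have := hW1W0 _ _ hu1 ht2; by case=> [[_ ?] _].
Qed.

Lemma seq_ex : exists (ys : nat -> G) (Vs : nat -> set G),
  (forall k, nbhs 0 (Vs k)) /\ (forall k, Step (Vs k) k (ys k) (Vs k.+1)).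
Proof.
have : forall kv : nat * set G, exists p : G * set G,
    nbhs 0 kv.2 -> Step kv.2 kv.1 p.1 p.2.
  move=> [k V]; have [hV|hV] := pselect (nbhs 0 V).
    by have [p hp] := step_ex V k hV; exists p.
  by exists (0, setT).
case/choice=> st hst.
pose Vs := fix Vs k := match k with 0 => setT | k'.+1 => (st (k', Vs k')).2 end.
have hV : forall k, nbhs 0 (Vs k).
  elim=> [|k IH] /=; first exact: filterT.
  by have [] := hst (k, Vs k) IH.
exists (fun k => (st (k, Vs k)).1), Vs; split => // k.
exact: (hst (k, Vs k) (hV k)).
Qed.

End Constr.

Section Seq.
Context (G : topologicalZmodType) (B : nat -> set G)
  (hBb : forall U, nbhs 0 U -> exists k, B k `<=` U)
  (ys : nat -> G) (Vs : nat -> set G)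
  (hV0 : forall k, nbhs 0 (Vs k))
  (hSt : forall k, @Step G B (Vs k) k (ys k) (Vs k.+1)).

Lemma Vzero k : Vs k 0.
Proof. exact: nbhs_singleton (hV0 k). Qed.

Lemma Vadd k a b : Vs k.+1 a -> Vs k.+1 b -> Vs k (a + b).
Proof.
have [_ _ _ _ [[V' [hV' _ hW]] _]] := hSt k.
by move=> ha hb; apply: hV'; [exact: hW|exact: hW].
Qed.

Lemma Vsub k : Vs k.+1 `<=` Vs k.
Proof. by move=> x hx; rewrite -[x]addr0; apply: Vadd => //; exact: Vzero. Qed.

Lemma Vmono j k : (j <= k)%N -> Vs k `<=` Vs j.
Proof.
elim: k => [|k IH]; first by rewrite leqn0 => /eqP ->.
rewrite leq_eqVlt => /orP[/eqP -> //|]; rewrite ltnS => /IH h x hx.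
exact/h/Vsub.
Qed.

Lemma Vsym k x : Vs k.+1 x -> Vs k.+1 (- x).
Proof. by have [_ _ h _ _] := hSt k; exact: h. Qed.

Lemma tailstep k (m : int) t : Vs k.+1 t -> Vs k (ys k *~ m + t).
Proof.
have [_ _ _ _ [[V' [hV' hc hW]] _]] := hSt k.
move=> ht; apply: hV'; last exact: hW.
by apply: hc; exists m.
Qed.

Lemma Vdisc k (m : int) t u : Vs k.+1 t -> Vs k.+1 u -> ys k *~ m = u - t -> m = 0.
Proof. by have [_ _ _ _ [_ h]] := hSt k; exact: h. Qed.

Lemma Vbase U : nbhs 0 U -> exists K, Vs K.+1 `<=` U.
Proof.
move=> /hBb [k hk]; exists k => x hx; apply: hk.
by have [_ _ _ h _] := hSt k; exact: h.
Qed.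

Definition S (n : nat) (c : ZN) : G := \sum_(0 <= i < n) ys i *~ c i.
Definition T (j n : nat) (c : ZN) : G := \sum_(j <= i < n) ys i *~ c i.

Lemma tail j n c : Vs j (T j n c).
Proof.
have [jn|nj] := leqP j n; last first.
  rewrite /T big_geq; [exact: Vzero|exact: ltnW].
rewrite -(subnKC jn).
move: (n - j)%N => m; clear jn.
elim: m j => [|m IH] j.
  rewrite addn0 /T big_geq; [exact: Vzero|exact: leqnn].
rewrite /T big_ltn; last by rewrite addnS ltnS leq_addr.
rewrite addnS -addSn; apply: tailstep; exact: IH.
Qed.

Lemma Sdecomp j n c : (j <= n)%N -> S n c = S j c + T j n c.
Proof. move=> jn; rewrite /S /T -big_cat_nat; [reflexivity|exact: leq0n|exact: jn]. Qed.

Lemma Szero j c : (forall i, (i < j)%N -> c i = 0) -> S j c = 0.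
Proof.
move=> h; rewrite /S big_nat_cond big1; first reflexivity.
move=> i /andP[/andP[_ hi] _].
by rewrite h ?mulr0z.
Qed.

Lemma S_recr k c : S k.+1 c = S k c + ys k *~ c k.
Proof. by rewrite /S big_nat_recr. Qed.

Lemma Dlem k c t u : Vs k t -> Vs k u -> S k c + t = u ->
  forall i, (i < k)%N -> c i = 0.
Proof.
elim: k c t u => [|k IH] c t u ht hu e; first by [].
have e' : S k c + (ys k *~ c k + t) = u.
  by rewrite -e S_recr addrA.
have hc : forall i, (i < k)%N -> c i = 0.
  by apply: (IH c _ u _ (Vsub k u hu) e'); exact: tailstep.
have ck : c k = 0.
  apply: (Vdisc k (c k) t u ht hu); rewrite -e' Szero; last exact: hc.
  by rewrite add0r addrK.
move=> i; rewrite ltnS leq_eqVlt => /orP[/eqP -> //|]; exact: hc.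
Qed.

Lemma conv_fin a : finsupp a -> exists l : G, (fun n => S n a) @ \oo --> l.
Proof.
case=> N hN; exists (S N a) => U hU.
exists N => // n hn /=.
rewrite (Sdecomp N n a hn).
have -> : T N n a = 0.
  rewrite /T big_nat_cond big1 // => i /andP[/andP[hi _] _].
  by rewrite hN ?mulr0z.
rewrite addr0; exact: nbhs_singleton hU.
Qed.

Lemma cauchyS a : group_cauchy (fun n => S n a).
Proof.
move=> U hU; have [K hK] := Vbase _ hU; exists K.+1 => m n hm hn.
case: (leqP n m) => nm.
  rewrite (Sdecomp n m a nm) addrC addKr; apply: hK.
  apply: (Vmono K.+1 n hn); exact: tail.
rewrite (Sdecomp m n a (ltnW nm)) opprD addrA subrr add0r; apply: hK.
apply: (Vsym K); apply: (Vmono K.+1 m hm); exact: tail.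
Qed.

Section Emb.
Context (hH : hausdorff_space G) (A : set ZN)
  (Aadd : forall a b, A a -> A b -> A (a + b))
  (Asub : forall a b, A a -> A b -> A (a - b))
  (hconv : forall a, A a -> exists l : G, (fun n => S n a) @ \oo --> l).

Definition f (a : ZN) : G :=
  match pselect (exists l : G, (fun n => S n a) @ \oo --> l) with
  | left h => projT1 (cid h) | right _ => 0 end.

Lemma fP a : A a -> (fun n => S n a) @ \oo --> f a.
Proof.
move=> /hconv h; rewrite /f; case: pselect => [h'|]; last by move=> /(_ h).
exact: (projT2 (cid h')).
Qed.

Lemma ev (x : nat -> G) (l : G) N : x @ \oo --> l -> nbhs l N ->
  exists n0, forall n, (n0 <= n)%N -> N (x n).
Proof. move=> cv hN; have [n0 _ h] := cv _ hN; exists n0 => n hn; exact: h. Qed.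

Lemma S_add n a b : S n (a + b) = S n a + S n b.
Proof. rewrite /S -big_split; apply: eq_bigr => i _; exact: mulrzDr. Qed.

Lemma lim_add (x y : nat -> G) (l1 l2 : G) : x @ \oo --> l1 -> y @ \oo --> l2 ->
  (fun n => x n + y n) @ \oo --> l1 + l2.
Proof.
move=> hx hy.
have hp : (fun n => (x n, y n)) @ \oo --> (l1, l2) by apply: cvg_pair.
have hc := @add_continuous G (l1, l2).
have := cvg_comp (fun n => (x n, y n)) (fun p : G * G => p.1 + p.2) hp hc.
by [].
Qed.

Lemma f_add a b : A a -> A b -> f (a + b) = f a + f b.
Proof.
move=> ha hb.
have h1 := fP _ (Aadd _ _ ha hb).
have h2 := lim_add _ _ _ _ (fP _ ha) (fP _ hb).
have e : (fun n => S n (a + b)) = (fun n => S n a + S n b).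
  by apply: funext => n; exact: S_add.
rewrite e in h1.
exact: (cvg_unique hH h1 h2).
Qed.


Lemma f_sub a b : A a -> A b -> f (a - b) = f a - f b.
Proof.
move=> ha hb; have := f_add _ _ (Asub _ _ ha hb) hb.
by rewrite subrK => ->; rewrite addrK.
Qed.

Lemma nbhs_diff (x : G) k : nbhs x (fun y => Vs k (y - x)).
Proof.
apply/(@nbhs_shift G); apply: (filterS _ (hV0 k)) => z hz.
by rewrite addrC addKr.
Qed.

Lemma Key K c : A c -> Vs K.+2 (f c) -> forall i, (i < K.+1)%N -> c i = 0.
Proof.
move=> hc hf.
have [n0 hn0] := ev _ _ _ (fP _ hc) (nbhs_diff (f c) K.+2).
pose n := maxn n0 K.+1.
have hn : Vs K.+2 (S n c - f c) := hn0 n (leq_maxl _ _).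
apply: (Dlem K.+1 c (T K.+1 n c) (S n c)).
- exact: tail.
- have -> : S n c = f c + (S n c - f c) by rewrite addrC subrK.
  exact: Vadd.
- by rewrite -Sdecomp // leq_maxr.
Qed.

Lemma f_inj a b : A a -> A b -> f a = f b -> a = b.
Proof.
move=> ha hb e.
have e0 : f (a - b) = 0 by rewrite f_sub // e subrr.
apply: functional_extensionality_dep => i.
have hv : Vs i.+2 (f (a - b)) by rewrite e0; exact: Vzero.
have := Key i (a - b) (Asub _ _ ha hb) hv i (ltnSn i).
by move=> /eqP; rewrite subr_eq0 => /eqP.
Qed.

Lemma f_cont a : A a -> forall V : set G, nbhs (f a) V ->
  exists U : set ZN, nbhs a U /\ forall b, A b -> U b -> V (f b).
Proof.
move=> ha V hV.
have [K hK] := Vbase _ ((@nbhs_shift G (f a) V).1 hV).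
exists (cyl K.+2 a); split; first exact: cyl_nbhs.
move=> b hb cb.
have hcA := Asub _ _ hb ha.
have ci : forall i, (i < K.+2)%N -> (b - a) i = 0.
  by move=> i hi; change (b i - a i = 0); rewrite cb ?subrr.
have fb : f b = f a + f (b - a) by rewrite f_sub // addrC subrK.
rewrite fb; apply: hK.
have [n0 hn0] := ev _ _ _ (fP _ hcA) (nbhs_diff (f (b - a)) K.+2).
pose n := maxn n0 K.+2.
have hSn : Vs K.+2 (S n (b - a)).
  rewrite (Sdecomp K.+2 n (b - a) (leq_maxr _ _)) (Szero K.+2 (b - a) ci) add0r.
  exact: tail.
have -> : f (b - a) = S n (b - a) + - (S n (b - a) - f (b - a)).
  by rewrite opprB [X in _ = X]addrC subrK.
apply: Vadd => //; apply: Vsym; exact: hn0 n (leq_maxl _ _).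
Qed.

Lemma f_open a : A a -> forall U : set ZN, nbhs a U ->
  exists V : set G, nbhs (f a) V /\ forall b, A b -> V (f b) -> U b.
Proof.
move=> ha U hU.
have [K hK] := nbhs_cyl a U hU.
exists (fun x => Vs K.+2 (x - f a)); split; first exact: nbhs_diff.
move=> b hb hv; apply: hK => i hi.
have hv' : Vs K.+2 (f (b - a)) by rewrite f_sub.
have := Key K (b - a) (Asub _ _ hb ha) hv' i (leqW hi).
by move=> /eqP; rewrite subr_eq0 => /eqP.
Qed.

Lemma f_copy : A 0 -> contains_copy_of A G.
Proof.
move=> A0.
exists (f @` A); split.
  split.
    exists 0 => //; have := f_sub _ _ A0 A0; rewrite subrr => ->; exact: subrr.
  move=> x y [a ha <-] [b hb <-]; exists (a - b); first exact: Asub.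
  exact: f_sub.
exists f; split => //.
split; first exact: f_add.
split; first exact: f_inj.
split; [exact: f_cont|exact: f_open].
Qed.
End Emb.
End Seq.

Definition eK (K : nat) : ZN := fun i => ((i == K) : nat)%:Z.

Lemma copy_notNSS (G : topologicalZmodType) (A : set ZN) : A 0 ->
  (forall a b, A a -> A b -> A (a - b)) -> (forall K, A (eK K)) ->
  contains_copy_of A G -> ~ NSS G.
Proof.
move=> A0 Asub AeK [H [_ [f [_ [fadd [finj [fcont _]]]]]]] [U [hU hsub]].
have f0 : f 0 = 0.
  have := fadd 0 0 A0 A0; rewrite addr0 => e.
  by have := congr1 (fun x => x - f 0) e; rewrite /= subrr addrK.
have fsub a b : A a -> A b -> f (a - b) = f a - f b.
  move=> ha hb; have := fadd (a - b) b (Asub _ _ ha hb) hb.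
  by rewrite subrK => ->; rewrite addrK.
have hU0 : nbhs (f 0) U by rewrite f0.
have [U' [hU' hU'U]] := fcont 0 A0 U hU0.
have [K hK] := nbhs_cyl 0 U' hU'.
pose H' := [set x | exists2 b, (A b /\ cyl K 0 b) & x = f b].
have sH : is_subgroup H'.
  split.
    exists 0; last by rewrite f0.
    by split => // i _.
  move=> x y [b1 [hb1 c1] ->] [b2 [hb2 c2] ->].
  exists (b1 - b2); last by rewrite fsub.
  split; first exact: Asub.
  move=> i hi; change (b1 i - b2 i = 0); by rewrite c1 // c2 // subrr.
have HU : H' `<=` U.
  by move=> x [b [hb cb] ->]; apply: hU'U hb (hK _ cb).
have e := hsub H' sH HU.
have : H' (f (eK K)).
  exists (eK K) => //; split; first exact: AeK.
  move=> i hi; change (((i == K) : nat)%:Z = 0).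
  by rewrite (ltn_eqF hi).
rewrite e /= -f0 => /(finj _ _ (AeK K) A0) /(congr1 (fun g : ZN => g K)).
by rewrite /eK eqxx.
Qed.


Theorem corollary8p3 (G : topologicalZmodType) :
  torsion_free G -> metrizable G -> cyclic_subgroups_discrete G ->
  ((~ NSS G <-> contains_copy_of finsupp G) /\
   (group_complete G ->
      (~ NSS G <-> contains_copy_of finsupp G) /\
      (~ NSS G <-> contains_copy_of setT G))).
Proof.
move=> tf met cd.
have hH := metr_hausdorff G met.
have [B [hB hBb]] := metric_base G met.
have fin0 : finsupp (0%R : ZN) by exists 0%N.
have finsub : forall a b, finsupp a -> finsupp b -> finsupp (a - b).
  move=> a b [N hN] [M hM]; exists (maxn N M) => n; rewrite geq_max => /andP[h1 h2].
  by change (a n - b n = 0); rewrite hN // hM // subrr.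
have finadd : forall a b, finsupp a -> finsupp b -> finsupp (a + b).
  move=> a b [N hN] [M hM]; exists (maxn N M) => n; rewrite geq_max => /andP[h1 h2].
  by change (a n + b n = 0); rewrite hN // hM // addr0.
have fineK : forall K, finsupp (eK K).
  move=> K; exists K.+1 => n hn; change (((n == K) : nat)%:Z = 0).
  by rewrite (gtn_eqF hn).
have b1 : contains_copy_of finsupp G -> ~ NSS G.
  exact: (@copy_notNSS G finsupp fin0 finsub fineK).
have b2 : contains_copy_of setT G -> ~ NSS G.
  apply: (@copy_notNSS G setT) => //.
have fwd : ~ NSS G -> contains_copy_of finsupp G /\
    (group_complete G -> contains_copy_of setT G).
  move=> nn; have [ys [Vs [hV0 hSt]]] := seq_ex G tf cd nn B hB.
  split.
    apply: (@f_copy G B hBb ys Vs hV0 hSt hH finsupp finadd finsub _ fin0).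
    move=> a ha; exact: (@conv_fin G ys a ha).
  move=> hc; apply: (@f_copy G B hBb ys Vs hV0 hSt hH setT) => //.
  move=> a _; apply: hc; exact: (@cauchyS G B hBb ys Vs hV0 hSt).
have e1 : ~ NSS G <-> contains_copy_of finsupp G.
  by split; [move=> /fwd [] | exact: b1].
split => // hc; split => //.
split; [move=> /fwd [_]; apply; exact: hc | exact: b2].
Qed.
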